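(* Assume $X_t>0$ for all $t\in\mathcal T$ and let $\alpha=\sum_tY_t/X_t$. Then $\max_{\delta\in[0,1]}\delta\big(1-\frac{\delta}{2}\alpha\big)=L(\alpha)$, attained at $\delta=\min\{1/\alpha,1\}$. Consequently, in the weakest-link game, any strategy $F^*_{\mathcal X}\in\mathbb F(\boldsymbol X)$ whose $c$-marginals are, for all $c$ and $\boldsymbol u\in\mathbb R^T_{\ge0}$, $F^*_{\mathcal X,c}(\boldsymbol u)=\min_t\min\{\frac{u_t}{2v_cX_t},1\}$ if $\alpha\le1$, and $F^*_{\mathcal X,c}(\boldsymbol u)=1-\frac1\alpha+\frac1\alpha\min_t\min\{\frac{u_t}{2v_cX_t\alpha},1\}$ if $\alpha>1$, satisfies $\pi_{\mathcal X}(F^*_{\mathcal X},F_{\mathcal Y})\ge L(\alpha)$ for every $F_{\mathcal Y}\in\mathbb F(\boldsymbol Y)$.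
   Context: Contests $\mathcal C=\{1,\dots,C\}$ with values $v_c>0$, $\sum_cv_c=1$; types $\mathcal T=\{1,\dots,T\}$; $\boldsymbol Y\in\mathbb R^T_{\ge0}$. $\mathbb F(\boldsymbol X)$ is the set of probability distributions $F$ on $\mathbb R^{CT}_{\ge0}$ (points $\mathbf x=(\boldsymbol x_c)_c$, $\boldsymbol x_c=(x_{c,t})_t$) with $\mathbb E_{\mathbf x\sim F}[\sum_cx_{c,t}]\le X_t$ for all $t$; similarly $\mathbb F(\boldsymbol Y)$. $c$-marginal: $F_c(\boldsymbol u)=\mathbb P_{\mathbf x\sim F}[x_{c,t}\le u_t\ \forall t]$. Weakest-link rule $W_{\mathrm{WL}}(\boldsymbol x,\boldsymbol y)=\mathbf 1\{x_t\ge y_t\ \forall t\}$; $\pi_{\mathcal X}(F_{\mathcal X},F_{\mathcal Y})=\mathbb E[\sum_cv_cW_{\mathrm{WL}}(\boldsymbol x_c,\boldsymbol y_c)]$ with independent $\mathbf x\sim F_{\mathcal X}$, $\mathbf y\sim F_{\mathcal Y}$. $L(\alpha)=1-\alpha/2$ for $\alpha\le1$, $L(\alpha)=1/(2\alpha)$ for $\alpha>1$. *)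

(* Defs.v *)
From HB Require Import structures.
From mathcomp Require Import all_boot all_order all_algebra.
From mathcomp Require Import all_classical all_reals all_analysis.
Set Implicit Arguments. Unset Strict Implicit. Unset Printing Implicit Defensive.
Import Order.TTheory GRing.Theory Num.Theory.
Local Open Scope ring_scope.
Local Open Scope classical_set_scope.

(* A pure strategy / allocation: a wl_point of R^{C T}, stored as a C-tuple of
   T-tuples of reals, equipped with the product (tuple) Borel sigma-algebra. *)
Definition wl_point (R : realType) (nC nT : nat) := nC.-tuple (nT.-tuple R).

Definition wl_coord (R : realType) (nC nT : nat) (x : wl_point R nC nT)
  (c : 'I_nC) (t : 'I_nT) : R := tnth (tnth x c) t.

Definition wl_in_FF (R : realType) (nC nT : nat)
  (F : probability (wl_point R nC nT) R) (X : 'I_nT -> R) : Prop :=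
  F [set x | forall c t, 0 <= wl_coord x c t] = 1%E /\
  forall t : 'I_nT, (\int[F]_x (\sum_(c < nC) wl_coord x c t)%:E <= (X t)%:E)%E.

Definition wl_marginal (R : realType) (nC nT : nat)
  (F : probability (wl_point R nC nT) R) (c : 'I_nC) (u : 'I_nT -> R) : \bar R :=
  F [set x | forall t, wl_coord x c t <= u t].

Definition wl_W (R : realType) (nT : nat) (x y : nT.-tuple R) : R :=
  if [forall t, tnth y t <= tnth x t] then 1 else 0.

(* Payoff pi_X(F_X, F_Y) = E[sum_c v_c wl_W(x_c, y_c)], x ~ F_X, y ~ F_Y
   independent (iterated integral against the product of the two laws). *)
Definition wl_payoffX (R : realType) (nC nT : nat) (v : 'I_nC -> R)
  (FX FY : probability (wl_point R nC nT) R) : \bar R :=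
  (\int[FX]_x \int[FY]_y (\sum_(c < nC) v c * wl_W (tnth x c) (tnth y c))%:E)%E.

Definition wl_Lfun (R : realType) (a : R) : R :=
  if a <= 1 then 1 - a / 2 else (2 * a)^-1.

(* delta* = min{1/alpha, 1}, with the convention 1/0 = +oo. *)
Definition wl_delta_star (R : realType) (a : R) : R :=
  if a <= 1 then 1 else a^-1.

(* Main.v *)
Require Import Defs.
From HB Require Import structures.
From mathcomp Require Import all_boot all_order all_algebra.
From mathcomp Require Import all_classical all_reals all_analysis.
From mathcomp Require Import ring lra measurable_realfun.
Import Order.TTheory GRing.Theory Num.Theory.
Local Open Scope ring_scope.
Local Open Scope classical_set_scope.

Lemma meas_le (R : realType) d (T : measurableType d) (f g : T -> R) :
  measurable_fun setT f -> measurable_fun setT g ->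
  measurable [set x | f x <= g x].
Proof.
move=> mf mg.
have := measurable_fun_ler mf mg measurableT (_ : measurable [set true]).
by rewrite setTI; apply.
Qed.

Lemma meas_all (R : realType) d (T : measurableType d) (I : finType)
  (f g : I -> T -> R) :
  (forall i, measurable_fun setT (f i)) -> (forall i, measurable_fun setT (g i)) ->
  measurable [set x | forall i, f i x <= g i x].
Proof.
move=> mf mg.
have -> : [set x | forall i, f i x <= g i x] =
   \bigcap_(i in [set: I]) [set x | f i x <= g i x].
  by apply/seteqP; split => x /= H i; [move=> _; apply: H|apply: H].
apply: fin_bigcap_measurable; first exact: finite_finset.
move=> i _.
exact: meas_le.
Qed.

Lemma coord_meas (R : realType) nC nT (c : 'I_nC) (t : 'I_nT) :
  measurable_fun setT (fun x : wl_point R nC nT => wl_coord x c t).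
Proof.
exact: measurableT_comp (measurable_tnth t) (measurable_tnth c).
Qed.

Lemma probE (R : realType) d (T : measurableType d) (P : probability T R) S :
  measurable S -> P S = (fine (P S))%:E.
Proof.
move=> mS; rewrite fineK // ge0_fin_numE // (le_lt_trans (probability_le1 _ mS)) //.
exact: ltey.
Qed.

Definition pr (R : realType) d (T : measurableType d) (P : probability T R) (S : set T) : R :=
  fine (P S).
Arguments pr {R d T}.

Lemma pr_le (R : realType) d (T : measurableType d) (P : probability T R) A B :
  measurable A -> measurable B -> A `<=` B -> pr P A <= pr P B.
Proof.
move=> mA mB AB; rewrite -lee_fin /pr -!probE //.
by apply: le_measure; rewrite ?inE.
Qed.

Lemma pr_ge0 (R : realType) d (T : measurableType d) (P : probability T R) A :
  measurable A -> 0 <= pr P A.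
Proof. by move=> mA; rewrite -lee_fin /pr -probE. Qed.

Lemma prU (R : realType) d (T : measurableType d) (P : probability T R) A B :
  measurable A -> measurable B -> pr P (A `|` B) <= pr P A + pr P B.
Proof.
move=> mA mB; rewrite -lee_fin /pr EFinD -!probE //; last exact: measurableU.
exact: measureU2.
Qed.

Lemma prC (R : realType) d (T : measurableType d) (P : probability T R) A :
  measurable A -> pr P (~` A) = 1 - pr P A.
Proof.
move=> mA; apply/EFin_inj; rewrite /pr EFinB -!probE //; last exact: measurableC.
exact: probability_setC.
Qed.

Lemma prD (R : realType) d (T : measurableType d) (P : probability T R) B C :
  measurable B -> measurable C -> B `<=` C -> pr P (C `\` B) = pr P C - pr P B.
Proof.
move=> mB mC BC; apply/EFin_inj; rewrite /pr EFinB -!probE //; last exact: measurableD.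
rewrite measureD //; last by rewrite (le_lt_trans (probability_le1 _ mC)) // ltey.
by rewrite setIidr.
Qed.

Lemma pr_bigU (R : realType) d (T : measurableType d) (P : probability T R) n
  (E : 'I_n -> set T) : (forall i, measurable (E i)) ->
  pr P (\big[setU/set0]_(i < n) E i) <= \sum_(i < n) pr P (E i).
Proof.
move=> mE.
pose Q (A : set T) (s : R) := measurable A /\ pr P A <= s.
suff [] : Q (\big[setU/set0]_(i < n) E i) (\sum_(i < n) pr P (E i)) by [].
apply: big_ind2.
- by split => //; rewrite /pr measure0.
- move=> A1 s1 A2 s2 [m1 h1] [m2 h2]; split; first exact: measurableU.
  by rewrite (le_trans (@prU _ _ _ P _ _ m1 m2)) // lerD.
- by move=> i; split.
Qed.

Lemma sub_bigsetU (T : Type) n (E : 'I_n -> set T) i :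
  E i `<=` \big[setU/set0]_(j < n) E j.
Proof. by rewrite (bigD1 i) //= => x Ex; left. Qed.

Lemma bigmin_ge0 (R : realType) n (F : 'I_n -> R) :
  (forall i, 0 <= F i) -> 0 <= \big[Order.min/1]_(i < n) F i.
Proof.
move=> H; apply: (big_ind (fun x => 0 <= x)) => //.
by move=> x y hx hy; rewrite le_min hx hy.
Qed.

Lemma bigmin_const (R : realType) n (F : 'I_n -> R) (a : R) (t0 : 'I_n) :
  (forall i, F i = a) -> a <= 1 -> \big[Order.min/1]_(i < n) F i = a.
Proof.
move=> H a1; apply/le_anti/andP; split.
  by rewrite -(H t0); exact: bigmin_le.
apply: (big_ind (fun x => a <= x)) => //.
  by move=> x y hx hy; rewrite le_min hx hy.
by move=> i _; rewrite H.
Qed.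

Lemma key (R : realType) nC nT (FX : probability (wl_point R nC nT) R)
  (c : 'I_nC) (b : 'I_nT -> R) (k : R) (t0 : 'I_nT)
  (hb : forall t, 0 < b t) (hk : 1 <= k)
  (hF : forall u : 'I_nT -> R, (forall t, 0 <= u t) ->
     FX [set x | forall t, wl_coord x c t <= u t] =
     (1 - k^-1 + k^-1 * \big[Order.min/1]_(t < nT) Order.min (u t / b t) 1)%:E)
  (y : wl_point R nC nT) :
  k^-1 - k^-1 * \sum_(t < nT) Num.max (wl_coord y c t) 0 / b t <=
  pr FX [set x | forall t, wl_coord y c t <= wl_coord x c t].
Proof.
set w := fun t => Num.max (wl_coord y c t) 0.
have w0 t : 0 <= w t by rewrite /w le_max lexx orbT.
have mset (u : 'I_nT -> R) : measurable [set x : wl_point R nC nT | forall t, wl_coord x c t <= u t].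
  by apply: (@meas_all _ _ _ _ (fun t x => wl_coord x c t) (fun t _ => u t)) => t;
    [exact: coord_meas| exact: measurable_cst].
have prF (u : 'I_nT -> R) : (forall t, 0 <= u t) ->
    pr FX [set x | forall t, wl_coord x c t <= u t] =
    1 - k^-1 + k^-1 * \big[Order.min/1]_(t < nT) Order.min (u t / b t) 1.
  by move=> hu; rewrite /pr hF.
have mA : measurable [set x : wl_point R nC nT | forall t, wl_coord y c t <= wl_coord x c t].
  by apply: (@meas_all _ _ _ _ (fun t _ => wl_coord y c t) (fun t x => wl_coord x c t)) => t;
    [exact: measurable_cst| exact: coord_meas].
set A := [set x | forall t, wl_coord y c t <= wl_coord x c t].
set B := [set x : wl_point R nC nT | forall t, wl_coord x c t <= (fun _ => 0) t].
set G := [set x : wl_point R nC nT | forall t, wl_coord x c t <= b t].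
set Ct := fun t => [set x : wl_point R nC nT | forall s, wl_coord x c s <=
           (fun s => if s == t then w t else b s) s].
have k0 : 0 < k^-1 by rewrite invr_gt0 (lt_le_trans ltr01).
have hG : pr FX G = 1.
  rewrite prF; last by move=> t; exact: ltW.
  rewrite (@bigmin_const _ _ _ 1 t0) //; last by move=> t; rewrite divff ?gt_eqF // minxx.
  by rewrite mulr1 subrK.
have hB : pr FX B = 1 - k^-1.
  rewrite prF // (@bigmin_const _ _ _ 0 t0) ?mulr0 ?addr0 ?ler01 //.
  by move=> t; rewrite mul0r; apply/min_idPl; exact: ler01.
have hC t : pr FX (Ct t) <= 1 - k^-1 + k^-1 * (w t / b t).
  rewrite prF; last by move=> s; case: ifP => _ //; exact: ltW.
  rewrite lerD2l; apply: ler_wpM2l; first exact: ltW.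
  by apply: (le_trans (bigmin_le _ t _)); rewrite /= eqxx ge_min lexx.
have mB : measurable B by exact: mset.
have mCt t : measurable (Ct t) by exact: mset.
have cover : [set: wl_point R nC nT] `<=`
   ((A `|` ~` G) `|` B) `|` \big[setU/set0]_(t < nT) (Ct t `\` B).
  move=> x _.
  case: (pselect (A x)) => hA; first by left; left; left.
  case: (pselect (G x)) => hGx; last by left; left; right.
  case: (pselect (B x)) => hBx; first by left; right.
  right.
  have [t ht] : exists t, ~ (wl_coord y c t <= wl_coord x c t).
    by apply/existsNP => H; apply: hA => s; apply: H.
  apply: (@sub_bigsetU _ _ (fun t => Ct t `\` B) t); split => // s.
  case: ifPn => [/eqP -> | _]; last exact: hGx.
  rewrite /w le_max; apply/orP; left; rewrite ltW //.
  by rewrite ltNge; apply/negP.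
have h1 : 1 <= pr FX A + pr FX (~` G) + pr FX B + \sum_(t < nT) pr FX (Ct t `\` B).
  have -> : 1 = pr FX setT by rewrite /pr probability_setT.
  have mG : measurable G by exact: mset.
  have mU : measurable (\big[setU/set0]_(t < nT) (Ct t `\` B)).
    by apply: bigsetU_measurable => t _; exact: measurableD.
  have mGc : measurable (~` G) by exact: measurableC.
  have m1 : measurable (A `|` ~` G) by exact: measurableU.
  have m2 : measurable ((A `|` ~` G) `|` B) by exact: measurableU.
  have m3 : measurable (((A `|` ~` G) `|` B) `|` \big[setU/set0]_(t < nT) (Ct t `\` B)).
    exact: measurableU.
  apply: (le_trans (@pr_le _ _ _ FX _ _ measurableT m3 cover)).
  apply: (le_trans (@prU _ _ _ FX _ _ m2 mU)).
  rewrite lerD //; last by apply: pr_bigU => t; exact: measurableD.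
  apply: (le_trans (@prU _ _ _ FX _ _ m1 mB)).
  rewrite lerD2r; exact: (@prU _ _ _ FX _ _ mA mGc).
have hGc : pr FX (~` G) = 0 by rewrite prC ?hG ?subrr //; exact: mset.
have hS : \sum_(t < nT) pr FX (Ct t `\` B) <= k^-1 * \sum_(t < nT) w t / b t.
  rewrite mulr_sumr; apply: ler_sum => t _.
  rewrite prD //; last first.
    move=> x Bx s; case: ifPn => [/eqP -> | _].
      exact: (le_trans (Bx t) (w0 t)).
    exact: (le_trans (Bx s) (ltW (hb s))).
  by rewrite hB; move: (hC t); lra.
move: h1; rewrite hGc hB.
move: hS; lra.
Qed.

Definition Aset (R : realType) nC nT (y : wl_point R nC nT) (c : 'I_nC) :
  set (wl_point R nC nT) := [set x | forall t, wl_coord y c t <= wl_coord x c t].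
Arguments Aset {R nC nT}.

Lemma W_indic (R : realType) nC nT (x y : wl_point R nC nT) c :
  wl_W (tnth x c) (tnth y c) = \1_(Aset y c) x.
Proof.
rewrite /wl_W indicE; case: (boolP [forall t, _]) => [/forallP H|/forallP H].
  by rewrite mem_set.
rewrite memNset //= => H'; apply: H => t; exact: H'.
Qed.

Lemma mAset (R : realType) nC nT (y : wl_point R nC nT) c : measurable (Aset y c).
Proof.
by apply: (@meas_all _ _ _ _ (fun t _ => wl_coord y c t) (fun t x => wl_coord x c t)) => t;
    [exact: measurable_cst| exact: coord_meas].
Qed.

Lemma f_meas (R : realType) nC nT (v : 'I_nC -> R) :
  measurable_fun setT (fun z : wl_point R nC nT * wl_point R nC nT =>
    (\sum_(c < nC) v c * wl_W (tnth z.1 c) (tnth z.2 c))%:E).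
Proof.
apply/measurable_EFinP; apply: measurable_sum => c.
apply: measurable_funM; first exact: measurable_cst.
have -> : (fun z : wl_point R nC nT * wl_point R nC nT => wl_W (tnth z.1 c) (tnth z.2 c))
   = \1_[set z | forall t, wl_coord z.2 c t <= wl_coord z.1 c t].
  apply/funext => z; by rewrite W_indic !indicE.
apply: measurable_indic.
apply: (@meas_all _ _ _ _ (fun t z => wl_coord z.2 c t) (fun t z => wl_coord z.1 c t)) => t.
  exact: measurableT_comp (coord_meas _ _ _ c t) measurable_snd.
exact: measurableT_comp (coord_meas _ _ _ c t) measurable_fst.
Qed.

Lemma inner_eq (R : realType) nC nT (v : 'I_nC -> R) (hv : forall c, 0 <= v c)
  (FX : probability (wl_point R nC nT) R) (y : wl_point R nC nT) :
  (\int[FX]_x (\sum_(c < nC) v c * wl_W (tnth x c) (tnth y c))%:E =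
  (\sum_(c < nC) v c * pr FX (Aset y c))%:E)%E.
Proof.
under eq_integral do rewrite -sumEFin.
rewrite ge0_integral_sum //; last first.
  by move=> c x _; rewrite W_indic lee_fin mulr_ge0.
  move=> c; apply/measurable_EFinP; apply: measurable_funM; first exact: measurable_cst.
  under eq_fun do rewrite W_indic.
  by apply: measurable_indic; exact: mAset.
rewrite -sumEFin; apply: eq_bigr => c _.
under eq_integral do rewrite W_indic EFinM.
rewrite ge0_integralZl //.
- rewrite integral_indic ?setIT; last exact: mAset.
  by rewrite EFinM /pr -probE //; exact: mAset.
- exact: measurableT.
- by apply/measurable_EFinP; apply: measurable_indic; exact: mAset.
all: by move=> *; rewrite lee_fin ?hv ?indic_ge0.
Qed.

Lemma pointwise (R : realType) nC nT (v : 'I_nC -> R) (X : 'I_nT -> R) (k : R)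
  (FX : probability (wl_point R nC nT) R)
  (hv : forall c, 0 < v c) (hv1 : \sum_(c < nC) v c = 1)
  (hX : forall t, 0 < X t) (hk : 1 <= k)
  (hF : forall c (u : 'I_nT -> R), (forall t, 0 <= u t) ->
     FX [set x | forall t, wl_coord x c t <= u t] =
     (1 - k^-1 + k^-1 * \big[Order.min/1]_(t < nT) Order.min (u t / (2 * v c * X t * k)) 1)%:E)
  (y : wl_point R nC nT) :
  k^-1 <= \sum_(c < nC) v c * pr FX (Aset y c) +
          \sum_(t < nT) (2 * X t * k * k)^-1 * \sum_(c < nC) Num.max (wl_coord y c t) 0.
Proof.
have k0 : 0 < k by exact: (lt_le_trans ltr01).
have hA c : k^-1 - k^-1 * \sum_(t < nT) Num.max (wl_coord y c t) 0 / (2 * v c * X t * k)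
    <= pr FX (Aset y c).
  case: (pselect (exists t : 'I_nT, True)) => [[t0 _]|hn].
    apply: (@key _ _ _ FX c (fun t => 2 * v c * X t * k) k t0) => //.
      by move=> t; rewrite !mulr_gt0.
    exact: hF.
  rewrite big1; last by move=> t _; exfalso; apply: hn; exists t.
  have -> : Aset y c = setT by apply/seteqP; split => // x _ t; exfalso; apply: hn; exists t.
  rewrite /pr probability_setT /= mulr0 subr0 invf_le1 //.
have E c : v c * (k^-1 - k^-1 * \sum_(t < nT) Num.max (wl_coord y c t) 0 / (2 * v c * X t * k))
    = v c * k^-1 - \sum_(t < nT) (2 * X t * k * k)^-1 * Num.max (wl_coord y c t) 0.
  rewrite mulrBr; congr (_ - _); rewrite !mulr_sumr; apply: eq_bigr => t _.
  have v0 : v c != 0 by rewrite gt_eqF.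
  have X0 : X t != 0 by rewrite gt_eqF.
  have kk : k != 0 by rewrite gt_eqF.
  by set m := Num.max _ _; field; rewrite kk X0 v0.
have S : \sum_(c < nC) v c * (k^-1 - k^-1 * \sum_(t < nT) Num.max (wl_coord y c t) 0 / (2 * v c * X t * k))
   = k^-1 - \sum_(t < nT) (2 * X t * k * k)^-1 * \sum_(c < nC) Num.max (wl_coord y c t) 0.
  under eq_bigr do rewrite E.
  rewrite sumrB -mulr_suml hv1 mul1r; congr (_ - _).
  rewrite exchange_big /=; apply: eq_bigr => t _; by rewrite mulr_sumr.
have : \sum_(c < nC) v c * (k^-1 - k^-1 * \sum_(t < nT) Num.max (wl_coord y c t) 0 / (2 * v c * X t * k))
   <= \sum_(c < nC) v c * pr FX (Aset y c).
  apply: ler_sum => c _; apply: ler_wpM2l; [exact: ltW|exact: hA].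
rewrite S; lra.
Qed.

Lemma mS_meas (R : realType) nC nT (t : 'I_nT) :
  measurable_fun setT (fun y : wl_point R nC nT => \sum_(c < nC) Num.max (wl_coord y c t) 0).
Proof.
apply: measurable_sum => c.
have := measurable_maxr (coord_meas R nC nT c t) (measurable_cst (0:R)).
by []. 
Qed.

Lemma ae_part (R : realType) nC nT (Y : 'I_nT -> R) (FY : probability (wl_point R nC nT) R)
  (hFY : wl_in_FF FY Y) (t : 'I_nT) :
  (\int[FY]_y (\sum_(c < nC) Num.max (wl_coord y c t) 0)%:E <= (Y t)%:E)%E.
Proof.
case: hFY => hS hY.
set S := [set x : wl_point R nC nT | forall c t, 0 <= wl_coord x c t].
have mS : measurable S.
  have -> : S = [set x | forall p : 'I_nC * 'I_nT, (fun _ _ => 0) p x <= (fun p x => wl_coord x p.1 p.2) p x].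
    by apply/seteqP; split => x /= H; [case=> c s; exact: H| move=> c s; exact: (H (c, s))].
  apply: meas_all => p; [exact: measurable_cst| exact: coord_meas].
rewrite (@ae_eq_integral _ _ _ FY setT (fun y => (\sum_(c < nC) wl_coord y c t)%:E)) //.
- by apply/measurable_EFinP; exact: mS_meas.
- by apply/measurable_EFinP; apply: measurable_sum => c; exact: coord_meas.
- exists (~` S); split.
  + exact: measurableC.
  + by have := probability_setC FY mS; rewrite hS subee //.
  + move=> y /= hn Sy; apply: hn => _; congr (_%:E); apply: eq_bigr => c _.
    by apply/max_idPl; exact: Sy.
Qed.

Lemma intH (R : realType) nC nT (X Y : 'I_nT -> R) (k : R)
  (FY : probability (wl_point R nC nT) R)
  (hX : forall t, 0 < X t) (hk : 0 < k) (hFY : wl_in_FF FY Y) :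
  (\int[FY]_y (\sum_(t < nT) (2 * X t * k * k)^-1 * \sum_(c < nC) Num.max (wl_coord y c t) 0)%:E
   <= (\sum_(t < nT) (2 * X t * k * k)^-1 * Y t)%:E)%E.
Proof.
have a0 t : 0 <= (2 * X t * k * k)^-1.
  by rewrite invr_ge0 ltW // !mulr_gt0.
have s0 (t : 'I_nT) (y : wl_point R nC nT) : 0 <= \sum_(c < nC) Num.max (wl_coord y c t) 0.
  by apply: sumr_ge0 => c _; rewrite le_max lexx orbT.
under eq_integral do rewrite -sumEFin.
rewrite ge0_integral_sum //; first last.
- by move=> t y _ /=; rewrite lee_fin; exact: mulr_ge0 (a0 t) (s0 t y).
- by move=> t; apply/measurable_EFinP; apply: measurable_funM;
    [exact: measurable_cst| exact: mS_meas].
rewrite -sumEFin; apply: lee_sum => t _.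
under eq_integral do rewrite EFinM.
rewrite ge0_integralZl //; first last.
- by rewrite lee_fin.
- by move=> y _; rewrite lee_fin.
- by apply/measurable_EFinP; exact: mS_meas.
rewrite EFinM; apply: lee_wpmul2l; first by rewrite lee_fin.
exact: ae_part.
Qed.
Lemma alg_part (R : realType) (alpha : R) : 0 <= alpha ->
  ((forall delta : R, 0 <= delta <= 1 ->
      delta * (1 - delta / 2 * alpha) <= wl_Lfun alpha) /\
   0 <= wl_delta_star alpha <= 1 /\
   wl_delta_star alpha * (1 - wl_delta_star alpha / 2 * alpha) = wl_Lfun alpha).
Proof.
move=> a0; rewrite /wl_Lfun /wl_delta_star; case: ifPn => ha.
  split; last by split; [lra| field].
  move=> d /andP[d0 d1].
  have : 0 <= (1-d)*(2 - alpha*(1+d)) by apply: mulr_ge0; nra.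
  nra.
have a1 : 1 < alpha by rewrite ltNge.
have ai : alpha * alpha^-1 = 1 by rewrite mulfV // gt_eqF // (lt_trans ltr01).
have bi0 : 0 < alpha^-1 by rewrite invr_gt0 (lt_trans ltr01).
have bi1 : alpha^-1 <= 1 by rewrite invf_le1 // ?ltW // (lt_trans ltr01).
have e : (2 * alpha)^-1 = alpha^-1 / 2 by rewrite invfM mulrC.
rewrite e; split; last first.
  split; first by rewrite ltW.
  by field; rewrite gt_eqF // (lt_trans ltr01).
move=> d /andP[d0 d1].
have : 0 <= (alpha * d - 1) ^+ 2 by apply: sqr_ge0.
nra.
Qed.

Theorem lemma6 (R : realType) (nC nT : nat) (v : 'I_nC -> R)
  (X Y : 'I_nT -> R)
  (hv : forall c, 0 < v c) (hv1 : \sum_(c < nC) v c = 1)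
  (hX : forall t, 0 < X t) (hY : forall t, 0 <= Y t) :
  let alpha := \sum_(t < nT) Y t / X t in
  ((forall delta : R, 0 <= delta <= 1 ->
      delta * (1 - delta / 2 * alpha) <= wl_Lfun alpha) /\
   0 <= wl_delta_star alpha <= 1 /\
   wl_delta_star alpha * (1 - wl_delta_star alpha / 2 * alpha) = wl_Lfun alpha) /\
  (forall FX : probability (wl_point R nC nT) R,
     wl_in_FF FX X ->
     (forall (c : 'I_nC) (u : 'I_nT -> R), (forall t, 0 <= u t) ->
        wl_marginal FX c u =
        (if alpha <= 1 then
           \big[Order.min/1]_(t < nT) Order.min (u t / (2 * v c * X t)) 1
         else
           1 - alpha^-1 + alpha^-1 *
           \big[Order.min/1]_(t < nT)
              Order.min (u t / (2 * v c * X t * alpha)) 1)%:E) ->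
     forall FY : probability (wl_point R nC nT) R,
       wl_in_FF FY Y -> (wl_payoffX v FX FY >= (wl_Lfun alpha)%:E)%E).
Proof.
move=> alpha.
have a0 : 0 <= alpha by apply: sumr_ge0 => t _; apply: divr_ge0; [exact: hY| exact: ltW].
split; first exact: alg_part.
move=> FX _ hF FY hFY.
pose k := if alpha <= 1 then 1 else alpha.
have hk : 1 <= k by rewrite /k; case: ifPn => [_|h] //; rewrite ltW // ltNge.
have k0 : 0 < k by exact: (lt_le_trans ltr01).
have kk : k != 0 by rewrite gt_eqF.
have hF' c (u : 'I_nT -> R) : (forall t, 0 <= u t) ->
    FX [set x | forall t, wl_coord x c t <= u t] =
    (1 - k^-1 + k^-1 * \big[Order.min/1]_(t < nT) Order.min (u t / (2 * v c * X t * k)) 1)%:E.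
  move=> hu; have := hF c u hu; rewrite /wl_marginal /k; case: ifPn => _ -> //.
  rewrite invr1 subrr add0r mul1r; congr (_%:E); apply: eq_bigr => t _.
  by rewrite mulr1.
have hL : wl_Lfun alpha = k^-1 - alpha / (2 * k * k).
  rewrite /wl_Lfun /k; case: ifPn => h; first by rewrite invr1 !mulr1.
  have a0' : alpha != 0 by rewrite gt_eqF // (lt_trans ltr01) // ltNge.
  by field; rewrite a0'.
have hsum : \sum_(t < nT) (2 * X t * k * k)^-1 * Y t = alpha / (2 * k * k).
  rewrite /alpha mulr_suml; apply: eq_bigr => t _.
  have X0 : X t != 0 by rewrite gt_eqF.
  by field; rewrite X0 kk.
rewrite /wl_payoffX.
set f := fun z : wl_point R nC nT * wl_point R nC nT =>
  (\sum_(c < nC) v c * wl_W (tnth z.1 c) (tnth z.2 c))%:E.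
have mf : measurable_fun setT f by exact: f_meas.
have f0 z : (0 <= f z)%E.
  rewrite lee_fin; apply: sumr_ge0 => c _; apply: mulr_ge0; first exact: ltW.
  by rewrite /wl_W; case: ifP.
have -> : (\int[FX]_x \int[FY]_y (\sum_(c < nC) v c * wl_W (tnth x c) (tnth y c))%:E =
   \int[FX]_x \int[FY]_y f (x, y))%E by [].
rewrite (fubini_tonelli f mf f0).
set G := fun y => (\int[FX]_x f (x, y))%E.
set H := fun y : wl_point R nC nT =>
  (\sum_(t < nT) (2 * X t * k * k)^-1 * \sum_(c < nC) Num.max (wl_coord y c t) 0)%:E.
have mG : measurable_fun setT G by exact: (measurable_fun_fubini_tonelli_G f mf f0).
have G0 y : (0 <= G y)%E by apply: integral_ge0 => x _; exact: f0.
have H0 y : (0 <= H y)%E.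
  rewrite lee_fin; apply: sumr_ge0 => t _; apply: mulr_ge0.
    by rewrite invr_ge0 ltW // !mulr_gt0.
  by apply: sumr_ge0 => c _; rewrite le_max lexx orbT.
have mH : measurable_fun setT H.
  apply/measurable_EFinP; apply: measurable_sum => t; apply: measurable_funM;
    [exact: measurable_cst| exact: mS_meas].
have h1 : ((k^-1)%:E <= \int[FY]_y (G y + H y))%E.
  have <- : (\int[FY]_y (cst (k^-1)%:E) y = (k^-1)%:E)%E.
    rewrite integral_cst //; transitivity ((k^-1)%:E * 1)%E; last exact: mule1.
    congr (_ * _)%E; exact: probability_setT.
  apply: ge0_le_integral => //.
  all: try (by move=> y _; rewrite lee_fin invr_ge0 ltW).
  all: try (exact: emeasurable_funD).
  all: try (exact: measurable_cst).
  - move=> y _; rewrite /G /f inner_eq; last by move=> c; exact: ltW.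
    rewrite /H -EFinD lee_fin.
    exact: pointwise.
rewrite ge0_integralD // in h1.
have h2 := intH _ _ _ X Y k FY hX k0 hFY.
rewrite hsum in h2.
have hI0 : (0 <= \int[FY]_y H y)%E by apply: integral_ge0 => y _; exact: H0.
have hG0 : (0 <= \int[FY]_y G y)%E by apply: integral_ge0 => y _; exact: G0.
rewrite hL.
move: h1 h2 hI0 hG0; rewrite /H.
move: (\int[FY]_y G y)%E => a.
move: (\int[FY]_y _)%E => b.
case: a => [a| |] ; case: b => [b| |] //=; rewrite ?lee_fin.
- by move=> h1 h2 _ _; lra.
- by move=> _ _ _ _; exact: leey.
Qed.
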